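(* Let $i\in[n]$ and suppose bidder $i$ runs the Meta-Algorithm with an input algorithm $\mathcal{A}$ whose regret in the standard online learning setting is at most $\mathrm{Reg}_{\mathcal{A}}$ for every sequence of reward vectors in $[-1,1]^{K+1}$. If every auction format $\mathcal{M}^{(t)}$ satisfies allocation monotonicity, then bidder $i$'s regret in the repeated auction game, \[ \mathrm{Reg}_i:=\max_{s:[0,1]\to B}\sum_{t\in[T]}\big(u_i^{(t)}(s)-u_i^{(t)}(s_i^{(t)})\big), \] is at most $\mathrm{Reg}_{\mathcal{A}}$ (for any realization of the other bidders' bids and of the formats).
   Context: Setting. There are $n$ bidders. Bidder $i$'s value $v_i\in[0,1]$ is drawn independently from a continuous distribution $\mathcal{D}_i$ on $[0,1]$ with CDF $F_i$; $F_i^{-1}(y):=\inf\{v\in[0,1]:F_i(v)\ge y\}$ is its quantile function. The bid set is $B:=\{j/K: j=0,\dots,K\}$. A bidding strategy is any $s:[0,1]\to B$. In round $t$ of a $T$-round repeated auction, bidder $i$ picks $s_i^{(t)}$; the auctioneer picks $\mathcal{M}^{(t)}=(\mathbf{x}^{(t)},\mathbf{p}^{(t)})$, $\mathbf{x}^{(t)}:B^n\to\Delta([n])$ (nonnegative entries summing to at most 1), $\mathbf{p}^{(t)}:B^n\to[0,1]^n$; other bidders' bids $\mathbf{b}_{-i}^{(t)}\in B^{n-1}$ are realized. Allocation monotonicity: $x_i^{(t)}(b_i,\mathbf{b}_{-i})\le x_i^{(t)}(b_i',\mathbf{b}_{-i})$ whenever $b_i\le b_i'$. Utility: $u_i^{(t)}(s):=\mathbb{E}_{v_i\sim\mathcal{D}_i}[x_i^{(t)}(s(v_i),\mathbf{b}_{-i}^{(t)})v_i-p_i^{(t)}(s(v_i),\mathbf{b}_{-i}^{(t)})]$.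 Quantile strategies: $\boldsymbol{\pi}\in\Delta([K+1])$ (probability simplex); $\Pi_0:=0$, $\Pi_j:=\sum_{\ell\le j}\pi_\ell$. The strategy $s_{i,\boldsymbol{\pi}}$ bids $0$ on $[0,F_i^{-1}(\Pi_1)]$ and $\frac{j-1}{K}$ on $(F_i^{-1}(\Pi_{j-1}),F_i^{-1}(\Pi_j)]$ for $j=2,\dots,K+1$. Define $\mathbf{g}_i^{(t)}(\boldsymbol{\pi})\in\mathbb{R}^{K+1}$ by \[ g_{i,k}^{(t)}(\boldsymbol{\pi}):=\sum_{j=k}^{K}\Big(x_i^{(t)}\big(\tfrac{j-1}{K},\mathbf{b}_{-i}^{(t)}\big)-x_i^{(t)}\big(\tfrac{j}{K},\mathbf{b}_{-i}^{(t)}\big)\Big)F_i^{-1}(\Pi_j)+x_i^{(t)}(1,\mathbf{b}_{-i}^{(t)})-p_i^{(t)}\big(\tfrac{k-1}{K},\mathbf{b}_{-i}^{(t)}\big). \] Online learning algorithm $\mathcal{A}$ over $K+1$ actions: each round outputs $\boldsymbol{\pi}^{(t)}\in\Delta([K+1])$, then sees $\mathbf{r}^{(t)}\in[-1,1]^{K+1}$; regret $\max_{j}\sum_t(r_j^{(t)}-\sum_k\pi^{(t)}_kr^{(t)}_k)$. Meta-Algorithm (bidder $i$): each round, $\mathcal{A}$ outputs $\boldsymbol{\pi}^{(i,t)}$, the bidder plays $s_i^{(t)}:=s_{i,\boldsymbol{\pi}^{(i,t)}}$, and afterwards feeds $\mathbf{r}^{(t)}:=\mathbf{g}_i^{(t)}(\boldsymbol{\pi}^{(i,t)})$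 to $\mathcal{A}$. *)

(* Defs.v *)
From HB Require Import structures.
From mathcomp Require Import all_boot all_order all_algebra.
From mathcomp Require Import all_classical all_reals all_analysis.
Set Implicit Arguments. Unset Strict Implicit. Unset Printing Implicit Defensive.
Import Order.TTheory GRing.Theory Num.Theory.
Local Open Scope classical_set_scope.
Local Open Scope ring_scope.

(* Bids are represented by their index j : 'I_K.+1, standing for the bid j/K.
   Actions of the online learner are 'I_K.+1 (0-based: paper's action k is k.+1 here). *)

Section Defs.
Variable R : realType.

Definition cdf (P : probability R R) (v : R) : R := fine (P `]-oo, v]%classic).

Definition quantile (P : probability R R) (y : R) : R :=
  inf [set v : R | 0 <= v <= 1 /\ y <= cdf P v].

Definition upd (n K : nat) (b : {ffun 'I_n -> 'I_K.+1}) (i : 'I_n) (j : 'I_K.+1)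
  : {ffun 'I_n -> 'I_K.+1} := [ffun l => if l == i then j else b l].

(* Pi_m := sum_{l <= m} pi_l (paper, 1-based) = sum of the first m entries *)
Definition Pi (K : nat) (pi : {ffun 'I_K.+1 -> R}) (m : nat) : R :=
  \sum_(l < K.+1 | (l < m)%N) pi l.

(* quantile strategy s_{i,pi}: bid index k (bid k/K) on (F^{-1}(Pi_k), F^{-1}(Pi_{k+1})],
   bid 0 on [0, F^{-1}(Pi_1)].  Points v > F^{-1}(Pi_K) (a region only partly covered
   by the paper, of probability 0 beyond F^{-1}(1)) get bid K. *)
Definition qstrat (P : probability R R) (K : nat) (pi : {ffun 'I_K.+1 -> R}) (v : R)
  : 'I_K.+1 := inord (find (fun k => v <= quantile P (Pi pi k.+1)) (iota 0 K)).

(* reward vector g_i^{(t)}(pi), with xb j = x_i(j/K, b_{-i}), pb j = p_i(j/K, b_{-i}) *)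
Definition gvec (P : probability R R) (K : nat) (xb pb : 'I_K.+1 -> R)
  (pi : {ffun 'I_K.+1 -> R}) : {ffun 'I_K.+1 -> R} :=
  [ffun k : 'I_K.+1 =>
     \sum_(k.+1 <= j < K.+1)
        (xb (inord j.-1) - xb (inord j)) * quantile P (Pi pi j)
     + xb ord_max - pb k].

Definition util (P : probability R R) (K : nat) (xb pb : 'I_K.+1 -> R)
  (s : R -> 'I_K.+1) : \bar R :=
  (\int[P]_v ((xb (s v) * v - pb (s v))%:E))%E.

(* history of reward vectors fed to A by the Meta-Algorithm before round t *)
Fixpoint meta_hist (P : probability R R) (K : nat)
  (A : seq {ffun 'I_K.+1 -> R} -> {ffun 'I_K.+1 -> R})
  (xb pb : nat -> 'I_K.+1 -> R) (t : nat) : seq {ffun 'I_K.+1 -> R} :=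
  match t with
  | 0 => [::]
  | t'.+1 => let h := meta_hist P A xb pb t' in
             rcons h (gvec P (xb t') (pb t') (A h))
  end.

Definition ol_regret (K : nat) (A : seq {ffun 'I_K.+1 -> R} -> {ffun 'I_K.+1 -> R})
  (r : nat -> {ffun 'I_K.+1 -> R}) (T : nat) (j : 'I_K.+1) : R :=
  \sum_(t < T) (r t j - \sum_(k < K.+1) A [seq r s | s <- iota 0 t] k * r t k).

End Defs.

(* Main.v *)
Require Import Defs.
From HB Require Import structures.
From mathcomp Require Import all_boot all_order all_algebra.
From mathcomp Require Import all_classical all_reals all_analysis.
Import Order.TTheory GRing.Theory Num.Theory.
Local Open Scope classical_set_scope.
Local Open Scope ring_scope.
Section Q.
Context (R : realType) (P : probability R R)
  (hsupp : P `[0%R, 1%R]%classic = 1%E) (hcont : forall r : R, P [set r] = 0%E).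

Lemma Pfin (A : set R) : measurable A -> P A \is a fin_num.
Proof. by move=> mA; rewrite fin_num_measure. Qed.

Lemma Pge0 (A : set R) : (0 <= P A)%E.
Proof. exact: measure_ge0. Qed.

Lemma Ple1 (A : set R) : measurable A -> (P A <= 1)%E.
Proof. by move=> mA; apply: probability_le1. Qed.

Lemma PC01 : P (~` `[0%R, 1%R]%classic) = 0%E.
Proof. by rewrite probability_setC // hsupp subee. Qed.

Lemma Pout (A : set R) : measurable A -> A `<=` ~` `[0%R, 1%R]%classic -> P A = 0%E.
Proof.
move=> mA AC; apply/eqP; rewrite eq_le Pge0 andbT -PC01.
by apply: le_measure => //; rewrite inE //; apply: measurableC.
Qed.

Lemma cdf_ge0 v : 0 <= Defs.cdf P v.
Proof. by rewrite /Defs.cdf fine_ge0 // Pge0. Qed.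

Lemma cdf_le1 v : Defs.cdf P v <= 1.
Proof.
rewrite /Defs.cdf -lee_fin fineK ?Pfin //; exact: Ple1.
Qed.

Lemma cdf_le a b : a <= b -> Defs.cdf P a <= Defs.cdf P b.
Proof.
move=> ab; rewrite /Defs.cdf fine_le ?Pfin //; apply: le_measure; rewrite ?inE //.
exact: subitvPr.
Qed.

Lemma cdf_neg w : w < 0 -> Defs.cdf P w = 0.
Proof.
move=> w0; rewrite /Defs.cdf Pout //= => x /=; rewrite in_itv /= => xw.
rewrite in_itv /= => /andP[x0 _]; move: (le_trans x0 xw); rewrite leNgt w0.
by [].
Qed.

Lemma cdf1 : Defs.cdf P 1 = 1.
Proof.
apply/eqP; rewrite eq_le cdf_le1 /= /cdf -lee_fin fineK ?Pfin // -hsupp.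
apply: le_measure; rewrite ?inE //= => x; rewrite /= !in_itv /= => /andP[_ ->].
by [].
Qed.


Definition QS (y : R) := [set v : R | 0 <= v <= 1 /\ y <= Defs.cdf P v].

Lemma QS_lb y : has_lbound (QS y).
Proof. by exists 0 => v [/andP[]]. Qed.

Lemma QS1 y : y <= 1 -> QS y 1.
Proof. by move=> y1; split; [rewrite ler01 lexx | rewrite cdf1]. Qed.

Lemma quantile_ge0 y : y <= 1 -> 0 <= quantile P y.
Proof.
move=> y1; apply: lb_le_inf; first by exists 1; exact: QS1.
by move=> v [/andP[]].
Qed.

Lemma quantile_le1 y : y <= 1 -> quantile P y <= 1.
Proof. by move=> y1; apply: inf_lbound; [exact: QS_lb | exact: QS1]. Qed.

Lemma quantile_le y1 y2 : y1 <= y2 -> y2 <= 1 -> quantile P y1 <= quantile P y2.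
Proof.
move=> y12 y21; apply: lb_le_inf; first by exists 1; exact: QS1.
move=> v [v01 yv]; apply: inf_lbound; first exact: QS_lb.
by split => //; apply: le_trans yv.
Qed.


Lemma PcdfE v : P `]-oo, v]%classic = (Defs.cdf P v)%:E.
Proof. by rewrite /Defs.cdf fineK ?Pfin. Qed.

Lemma cdf_quantile_ge y : 0 <= y <= 1 -> y <= Defs.cdf P (quantile P y).
Proof.
move=> /andP[y0 y1]; set q := quantile P y.
pose F n := [set` Interval -oo%O (BRight (q + n.+1%:R^-1))] : set R.
have cv : (P \o F) n @[n --> \oo] --> P (\bigcap_n F n).
  apply: nonincreasing_cvg_mu.
  - by apply: (le_lt_trans (@Ple1 (F 0%N) (measurable_itv _))); rewrite ltry.
  - by move=> n; exact: measurable_itv.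
  - by apply: bigcapT_measurable => n; exact: measurable_itv.
  - move=> m n mn; apply/subsetPset; apply: subset_itvl.
    by rewrite bnd_simp lerD2l lef_pV2 ?posrE // ler_nat.
rewrite -(itvNycEbigcap false q) in cv.
rewrite -lee_fin -PcdfE -(cvg_lim _ cv) //.
apply: lime_ge; first by apply/cvg_ex; eexists; exact: cv.
apply: nearW => n /=; rewrite /F PcdfE lee_fin.
have [e [e01 ye] eq] : exists2 e, QS y e & e < q + n.+1%:R^-1.
  by apply: inf_adherent => //; split; [exists 1; exact: QS1 | exact: QS_lb].
by apply: le_trans ye _; apply: cdf_le; apply: ltW.
Qed.


Lemma cdf_quantile_le y : 0 <= y <= 1 -> Defs.cdf P (quantile P y) <= y.
Proof.
move=> /andP[y0 y1]; set q := quantile P y.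
pose G n := [set` Interval -oo%O (BRight (q - n.+1%:R^-1))] : set R.
have cv : (P \o G) n @[n --> \oo] --> P (\bigcup_n G n).
  apply: nondecreasing_cvg_mu.
  - by move=> n; exact: measurable_itv.
  - by apply: bigcupT_measurable => n; exact: measurable_itv.
  - move=> m n mn; apply/subsetPset; apply: subset_itvl.
    by rewrite bnd_simp lerD2l lerN2 lef_pV2 ?posrE // ler_nat.
have UG : \bigcup_n G n = `]-oo, q[%classic.
  apply/seteqP; split => z /=.
    move=> [n _]; rewrite /G /= in_itv /= => zq; apply: (le_lt_trans zq).
    by rewrite ltrBlDr ltrDl.
  rewrite in_itv /= => /ltr_add_invr [k hk]; exists k => //=.
  by rewrite /G /= in_itv /= lerBrDr ltW.
have Pq : P `]-oo, q]%classic = P `]-oo, q[%classic.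
  have -> : `]-oo, q]%classic = `]-oo, q[%classic `|` [set q].
    apply/seteqP; split => z /=; rewrite !in_itv /=.
      by rewrite le_eqVlt => /orP[/eqP->|->]; [right|left].
    by case=> [/ltW|->].
  rewrite measureU.
  - by rewrite [X in (_ + X)%E](hcont q) adde0.
  - exact: measurable_itv.
  - exact: measurable_set1.
  apply/seteqP; split => z //= [] ; rewrite in_itv /= => zq zq1. by rewrite zq1 ltxx in zq.
rewrite UG in cv.
rewrite -lee_fin -PcdfE Pq -(cvg_lim _ cv) //.
apply: lime_le; first by apply/cvg_ex; eexists; exact: cv.
apply: nearW => n /=; rewrite /G PcdfE lee_fin.
set w := q - n.+1%:R^-1.
have [w0|w0] := ltP w 0; first by rewrite cdf_neg.
have wq : w < q by rewrite /w ltrBlDr ltrDl.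
rewrite leNgt; apply/negP => /ltW yw.
have : q <= w.
  rewrite /q /quantile; apply: inf_lbound; first exact: QS_lb.
  split => //; rewrite w0 /=; apply: le_trans (ltW wq) _; exact: quantile_le1.
by rewrite leNgt wq.
Qed.

Lemma cdf_quantile y : 0 <= y <= 1 -> Defs.cdf P (quantile P y) = y.
Proof.
by move=> hy; apply/eqP; rewrite eq_le cdf_quantile_le // cdf_quantile_ge.
Qed.

End Q.

From mathcomp Require Import zify ring lra.
Section Alg.
Context (R : realType) (K : nat) (pi : {ffun 'I_K.+1 -> R})
  (pi_ge0 : forall k, 0 <= pi k) (pi_sum : \sum_(k < K.+1) pi k = 1).

Lemma Pi_ge0 m : 0 <= Pi pi m.
Proof. by rewrite /Pi sumr_ge0. Qed.

Lemma Pi_le m m' : (m <= m')%N -> Pi pi m <= Pi pi m'.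
Proof.
move=> mm'; rewrite /Pi [X in _ <= X](bigID (fun l : 'I_K.+1 => (l < m)%N)) /=.
have -> : \sum_(i < K.+1 | (i < m')%N && (i < m)%N) pi i = \sum_(i < K.+1 | (i < m)%N) pi i.
  apply: eq_bigl => l; case: (ltnP l m) => h; rewrite ?andbT ?andbF //.
  by rewrite (leq_trans h mm').
by rewrite lerDl sumr_ge0.
Qed.

Lemma Pi_full m : (K.+1 <= m)%N -> Pi pi m = 1.
Proof.
move=> Km; rewrite /Pi -pi_sum; apply: eq_bigl => l.
by rewrite (leq_trans (ltn_ord l) Km).
Qed.

Lemma Pi_le1 m : Pi pi m <= 1.
Proof.
case: (leqP m K.+1) => h; first by rewrite -(@Pi_full K.+1 (leqnn _)) Pi_le.
by rewrite Pi_full // ltnW.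
Qed.

Lemma Pi0 : Pi pi 0 = 0.
Proof. by rewrite /Pi big_pred0. Qed.

Lemma PiS k : (k < K.+1)%N -> Pi pi k.+1 = Pi pi k + pi (inord k).
Proof.
move=> kK; rewrite /Pi (bigID (fun l : 'I_K.+1 => (l < k)%N)) /=; congr (_ + _).
  by apply: eq_bigl => l; case: (ltnP l k) => h; rewrite ?andbT ?andbF // ltnS ltnW.
rewrite (big_pred1 (inord k)) // => l /=; rewrite -leqNgt -(inj_eq val_inj) /= inordK //.
by rewrite ltnS -eqn_leq eq_sym.
Qed.

End Alg.

Set Implicit Arguments. Unset Strict Implicit.
Section Strat.
Context (R : realType) (P : probability R R)
  (hsupp : P `[0%R, 1%R]%classic = 1%E)
  (K : nat) (pi : {ffun 'I_K.+1 -> R})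
  (pi_ge0 : forall k, 0 <= pi k) (pi_sum : \sum_(k < K.+1) pi k = 1).

Definition qq j := quantile P (Pi pi j).

Lemma qq_mono j j' : (j <= j')%N -> qq j <= qq j'.
Proof.
move=> jj; apply: (@quantile_le R P hsupp).
  exact: Pi_le.
exact: Pi_le1.
Qed.

Definition mm v := find (fun k => v <= qq k.+1) (iota 0 K).

Lemma mm_le v : (mm v <= K)%N.
Proof. by rewrite /mm -[X in (_ <= X)%N](size_iota 0 K) find_size. Qed.

Lemma qstratE v : val (qstrat P pi v) = mm v.
Proof. by rewrite /qstrat; apply: inordK; rewrite ltnS mm_le. Qed.

Lemma before_m k v : (k < mm v)%N -> qq k.+1 < v.
Proof.
move=> km; have := before_find 0 km; rewrite nth_iota ?add0n.
  by move/negbT; rewrite -ltNge.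
exact: leq_trans km (mm_le v).
Qed.

Lemma after_m k v : (mm v <= k)%N -> (k < K)%N -> v <= qq k.+1.
Proof.
move=> mk kK; have hm : (mm v < K)%N by exact: leq_ltn_trans mk kK.
have := @nth_find _ 0 (fun k => v <= qq k.+1) (iota 0 K).
rewrite has_find size_iota => /(_ hm); rewrite nth_iota // add0n => h.
by apply: le_trans h _; apply: qq_mono.
Qed.

Lemma m_lt k v : (0 < k)%N -> (k <= K)%N -> (mm v < k)%N = (v <= qq k).
Proof.
move=> k0 kK; apply/idP/idP => h.
  have := @after_m (mm v) v (leqnn _) (leq_trans h kK).
  by move/le_trans; apply; apply: qq_mono.
rewrite ltnNge; apply/negP => km.
have := @before_m k.-1 v; rewrite prednK // => /(_ km).
by rewrite ltNge h.
Qed.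

End Strat.

Section Hsec.
Context (R : realType) (P : probability R R)
  (hsupp : P `[0%R, 1%R]%classic = 1%E)
  (K : nat) (pi : {ffun 'I_K.+1 -> R})
  (pi_ge0 : forall k, 0 <= pi k) (pi_sum : \sum_(k < K.+1) pi k = 1)
  (xb pb : 'I_K.+1 -> R)
  (xb_mono : forall j j' : 'I_K.+1, (j <= j')%N -> xb j <= xb j').

Definition XX (j : nat) := xb (inord j).
Definition SS (k : nat) := \sum_(k.+1 <= j < K.+1) (XX j.-1 - XX j) * qq P pi j.
Definition HH (k : nat) (v : R) := XX k * v - SS k - XX K.

Lemma gvecH (k : 'I_K.+1) v : xb k * v - pb k - gvec P xb pb pi k = HH k v.
Proof.
rewrite /gvec ffunE /HH /XX inord_val.
have -> : (ord_max : 'I_K.+1) = inord K by apply: val_inj; rewrite /= inordK.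
rewrite /SS /qq; lra.
Qed.

Lemma SS_step k : (k < K)%N -> SS k = (XX k - XX k.+1) * qq P pi k.+1 + SS k.+1.
Proof. by move=> kK; rewrite /SS big_ltn. Qed.

Lemma HH_step k v : (k < K)%N ->
  HH k.+1 v - HH k v = (XX k.+1 - XX k) * (v - qq P pi k.+1).
Proof. move=> kK; rewrite /HH (SS_step kK); lra. Qed.

Lemma XX_step k : (k < K)%N -> XX k <= XX k.+1.
Proof.
move=> kK; apply: xb_mono; rewrite !inordK //; lia.
Qed.

Lemma HH_max k v : (k <= K)%N -> HH k v <= HH (mm P pi v) v.
Proof.
move=> kK; set m := mm P pi v.
have mK : (m <= K)%N by exact: mm_le.
case: (leqP m k) => mk.
  rewrite -(subnKC mk); elim: (k - m)%N (leq_sub2r m kK) => [|d IH] hd.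
    by rewrite addn0.
  have hd' : (m + d < K)%N by lia.
  apply: le_trans (IH (ltnW hd)); rewrite -subr_ge0 -opprB oppr_ge0 addnS.
  rewrite HH_step // mulr_ge0_le0 ?subr_ge0 ?XX_step // subr_le0.
  apply: (@after_m R P hsupp K pi pi_ge0 pi_sum); lia.
have key : forall d, (d <= m)%N -> HH (m - d) v <= HH m v.
  elim => [|d IH] hd; first by rewrite subn0.
  have hd' : (m - d.+1 < K)%N by lia.
  apply: le_trans (IH (ltnW hd)).
  have -> : (m - d = (m - d.+1).+1)%N by lia.
  rewrite -subr_ge0 HH_step // mulr_ge0 ?subr_ge0 ?XX_step //.
  apply: ltW; apply: before_m; lia.
have := key (m - k)%N (leq_subr _ _); by rewrite subKn // ltnW.
Qed.

End Hsec.

Section Bounds.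
Context (R : realType) (P : probability R R)
  (hsupp : P `[0%R, 1%R]%classic = 1%E)
  (K : nat) (pi : {ffun 'I_K.+1 -> R})
  (pi_ge0 : forall k, 0 <= pi k) (pi_sum : \sum_(k < K.+1) pi k = 1)
  (xb pb : 'I_K.+1 -> R)
  (xb_mono : forall j j' : 'I_K.+1, (j <= j')%N -> xb j <= xb j')
  (xb_ge0 : forall j, 0 <= xb j) (xb_le1 : forall j, xb j <= 1)
  (pb_ge0 : forall j, 0 <= pb j) (pb_le1 : forall j, pb j <= 1).

Lemma qq_ge0 j : 0 <= qq P pi j.
Proof. by apply: (@quantile_ge0 R P hsupp); apply: Pi_le1. Qed.

Lemma qq_le1 j : qq P pi j <= 1.
Proof. by apply: (@quantile_le1 R P hsupp); apply: Pi_le1. Qed.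

Lemma SS_bounds d : (d <= K)%N ->
  XX xb (K - d) - XX xb K <= SS P pi xb (K - d) <= 0.
Proof.
elim: d => [|d IH] hd.
  by rewrite subn0 /SS big_geq // subrr lexx.
have := IH (ltnW hd) => /andP[h1 h2].
have e : (K - d = (K - d.+1).+1)%N by lia.
rewrite SS_step; last by lia.
rewrite -e; have q0 := qq_ge0 (K - d); have q1 := qq_le1 (K - d).
have hx : XX xb (K - d.+1) <= XX xb (K - d).
  by rewrite e; apply: XX_step => //; lia.
move: h1 h2 hx q0 q1; set a := XX xb _; set b := XX xb (K - d); set c := XX xb K.
set q := qq P pi _; set S := SS P pi _ => h1 h2 hx q0 q1.
apply/andP; split; nra.
Qed.

Lemma gvecE (k : 'I_K.+1) : gvec P xb pb pi k = SS P pi xb k + XX xb K - pb k.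
Proof.
rewrite /gvec ffunE.
have -> : (ord_max : 'I_K.+1) = inord K by apply: val_inj; rewrite /= inordK.
by [].
Qed.

Lemma gvec_range (k : 'I_K.+1) : -1 <= gvec P xb pb pi k <= 1.
Proof.
rewrite gvecE; have := @SS_bounds (K - k)%N (leq_subr _ _).
rewrite subKn; last by rewrite -ltnS.
have xk : XX xb k = xb k by rewrite /XX inord_val.
have := xb_ge0 k; have := xb_le1 (inord K); have := pb_ge0 k; have := pb_le1 k.
rewrite /XX in xk *; rewrite xk; move=> *; apply/andP; split; lra.
Qed.

End Bounds.

Section Integ.
Context (R : realType) (P : probability R R)
  (hsupp : P `[0%R, 1%R]%classic = 1%E) (hcont : forall r : R, P [set r] = 0%E)
  (K : nat).

Definition D01 : set R := `[0%R, 1%R]%classic.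

Lemma mD01 : measurable D01.
Proof. exact: measurable_itv. Qed.

Lemma PI_D (A : set R) : measurable A -> P (A `&` D01) = P A.
Proof.
move=> mA; rewrite -[in RHS](setIT A) -(setUv D01) setIUr measureU.
- rewrite [X in (_ + X)%E](@Pout R P hsupp (A `&` ~` D01)) ?adde0 //.
    by apply: measurableI => //; apply: measurableC; exact: mD01.
- by apply: measurableI => //; exact: mD01.
- by apply: measurableI => //; apply: measurableC; exact: mD01.
- by rewrite setIACA setICr setI0.
Qed.

Lemma intTD (f : R -> \bar R) :
  measurable_fun (U := measurable_realfun.constructive_ereal_extended__canonical__measurable_structure_SigmaRing R) setT f ->
  (\int[P]_x f x = \int[P]_(x in D01) f x)%E.
Proof.
move=> mf; rewrite -(setUv D01) integral_setU.
- rewrite [X in (_ + X)%E]null_set_integral ?adde0 //.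
  + by apply: measurableC; exact: mD01.
  + move=> mC B mB; have := mf measurableT B mB; rewrite setTI => h; exact: measurableI.
  + exact: (@PC01 R P hsupp).
- exact: mD01.
- by apply: measurableC; exact: mD01.
- by rewrite setUv.
- by rewrite /disj_set setICr.
Qed.

Definition Apre (s : R -> 'I_K.+1) k := s @^-1` [set k].

Lemma sel_sum (s : R -> 'I_K.+1) (c : 'I_K.+1 -> R -> R) v :
  c (s v) v = \sum_k \1_(Apre s k) v * c k v.
Proof.
rewrite (bigD1 (s v)) //= big1 ?addr0.
  by rewrite indicE mem_set ?mul1r.
move=> k /negbTE kn; rewrite indicE memNset ?mul0r //.
by rewrite /Apre /= => e; rewrite e eqxx in kn.
Qed.

Lemma sel_meas (s : R -> 'I_K.+1) (hs : forall k, measurable (Apre s k))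
  (c : 'I_K.+1 -> R -> R) (hc : forall k, measurable_fun setT (c k)) :
  measurable_fun setT (fun v => c (s v) v).
Proof.
rewrite (_ : (fun v => c (s v) v) = fun v => \sum_k \1_(Apre s k) v * c k v).
  by apply: measurable_sum => k; apply: measurable_realfun.measurable_funM => //.
by apply: funext => v; rewrite sel_sum.
Qed.

Lemma int_bd (f : R -> R) (mf : measurable_fun setT f) (M : R)
  (hM : forall v, D01 v -> `|f v| <= M) : P.-integrable D01 (EFin \o f).
Proof.
apply: measurable_bounded_integrable.
- exact: mD01.
- by apply: (le_lt_trans (@Ple1 R P D01 mD01)); rewrite ltry.
- by apply: measurable_funTS.
- exists M; split => [|M0 MM0 v Dv /=]; first exact: num_real.
  by apply: le_trans (hM _ Dv) _; exact: ltW.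
Qed.

Lemma sel_int (s : R -> 'I_K.+1) (hs : forall k, measurable (Apre s k))
  (c : 'I_K.+1 -> R -> R) (hc : forall k, measurable_fun setT (c k)) (M : R)
  (hM : forall k v, D01 v -> `|c k v| <= M) :
  P.-integrable D01 (EFin \o (fun v => c (s v) v)).
Proof.
apply: measurable_bounded_integrable.
- exact: mD01.
- by apply: (le_lt_trans (@Ple1 R P D01 mD01)); rewrite ltry.
- by apply: measurable_funTS; exact: sel_meas.
- exists M; split => [|M0 MM0 v Dv /=]; first exact: num_real.
  by apply: le_trans (hM _ _ Dv) _; exact: ltW.
Qed.

Lemma sel_intc (s : R -> 'I_K.+1) (hs : forall k, measurable (Apre s k))
  (c : 'I_K.+1 -> R) :
  (\int[P]_(x in D01) (c (s x))%:E = (\sum_k fine (P (Apre s k)) * c k)%:E)%E.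
Proof.
transitivity (\int[P]_(x in D01) (\sum_k ((c k)%:E * (\1_(Apre s k) x)%:E)))%E.
  apply: eq_integral => x _; rewrite (sel_sum s (fun k _ => c k) x) -sumEFin.
  by apply: eq_bigr => k _; rewrite EFinM muleC.
rewrite integral_sum; last 2 first.
- exact: mD01.
- move=> k; apply: integrableZl; first exact: mD01.
  apply: (@int_bd (\1_(Apre s k))).
    exact: measurable_realfun.measurable_indic.
  by move=> v _; rewrite indicE; case: (v \in _); rewrite ?normr1 ?normr0 ?ler01.
rewrite -sumEFin; apply: eq_bigr => k _.
rewrite integralZl; last 2 first.
- exact: mD01.
- apply: (@int_bd (\1_(Apre s k))).
    exact: measurable_realfun.measurable_indic.
  by move=> v _; rewrite indicE; case: (v \in _); rewrite ?normr1 ?normr0 ?ler01.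
rewrite integral_indic //; last exact: mD01.
rewrite [X in (_ * X)%E](PI_D (hs k)).
by rewrite -[P (Apre s k)]fineK ?Pfin // -EFinM mulrC.
Qed.

End Integ.

Section QPre.
Context (R : realType) (P : probability R R)
  (hsupp : P `[0%R, 1%R]%classic = 1%E) (hcont : forall r : R, P [set r] = 0%E)
  (K : nat) (pi : {ffun 'I_K.+1 -> R})
  (pi_ge0 : forall k, 0 <= pi k) (pi_sum : \sum_(k < K.+1) pi k = 1).

Definition BB j : set R := [set v | (mm P pi v < j)%N].

Lemma BB_eq j : (0 < j)%N -> (j <= K)%N -> BB j = `]-oo, qq P pi j]%classic.
Proof.
have e := @m_lt R P hsupp K pi pi_ge0 pi_sum j.
move=> j0 jK; apply/seteqP; split => v /=; rewrite ?in_itv /=.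
  by move=> hv; have hv' : (mm P pi v < j)%N := hv; rewrite -e.
by move=> hv; rewrite /BB /= e.
Qed.

Lemma BB0 : BB 0 = set0.
Proof. by apply/seteqP; split => v. Qed.

Lemma BBT j : (K < j)%N -> BB j = setT.
Proof.
move=> Kj; apply/seteqP; split => v // _ /=.
exact: leq_ltn_trans (mm_le P pi v) Kj.
Qed.

Lemma BB_meas j : measurable (BB j).
Proof.
case: j => [|j]; first by rewrite BB0.
case: (leqP j.+1 K) => jK; first by rewrite BB_eq //; exact: measurable_itv.
by rewrite BBT.
Qed.

Lemma PBB j : (j <= K.+1)%N -> P (BB j) = (Pi pi j)%:E.
Proof.
case: j => [|j] jK; first by rewrite BB0 measure0 Pi0.
case: (leqP j.+1 K) => jK'.
  rewrite BB_eq // (@PcdfE R P) (@cdf_quantile R P hsupp hcont) //.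
  by rewrite Pi_ge0 // Pi_le1.
have -> : j.+1 = K.+1 by apply/eqP; rewrite eqn_leq jK.
by rewrite BBT // probability_setT Pi_full.
Qed.

Lemma Apre_q k : Apre (qstrat P pi) k = BB k.+1 `\` BB k.
Proof.
apply/seteqP; split => v; rewrite /Apre /BB /=.
  move=> e; have : val (qstrat P pi v) = val k by rewrite e.
  by rewrite qstratE => ->; rewrite ltnSn ltnn.
move=> [h1 h2]; apply: val_inj; rewrite /= qstratE.
by apply/eqP; rewrite eqn_leq -ltnS h1 leqNgt; apply/negP.
Qed.

Lemma Apre_q_meas k : measurable (Apre (qstrat P pi) k).
Proof. by rewrite Apre_q; apply: measurableD; apply: BB_meas. Qed.

Lemma PA_q k : fine (P (Apre (qstrat P pi) k)) = pi k.
Proof.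
rewrite Apre_q measureD; try exact: BB_meas; last first.
  by apply: (le_lt_trans (@Ple1 R P _ (BB_meas _))); rewrite ltry.
have -> : BB k.+1 `&` BB k = BB k.
  by apply/seteqP; split => v; [case | move=> h; split => //; exact: ltnW].
rewrite [X in (X - _)%E]PBB // [X in (_ - X)%E]PBB; last by apply: ltnW.
by rewrite -EFinB /= (@PiS R K pi k (ltn_ord k)) inord_val addrAC subrr add0r.
Qed.

End QPre.

Section Round.
Context (R : realType) (P : probability R R)
  (hsupp : P `[0%R, 1%R]%classic = 1%E) (hcont : forall r : R, P [set r] = 0%E)
  (K : nat) (pi : {ffun 'I_K.+1 -> R})
  (pi_ge0 : forall k, 0 <= pi k) (pi_sum : \sum_(k < K.+1) pi k = 1)
  (xb pb : 'I_K.+1 -> R)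
  (xb_mono : forall j j' : 'I_K.+1, (j <= j')%N -> xb j <= xb j')
  (xb_ge0 : forall j, 0 <= xb j) (xb_le1 : forall j, xb j <= 1)
  (pb_ge0 : forall j, 0 <= pb j) (pb_le1 : forall j, pb j <= 1).

Let g := gvec P xb pb pi.

Lemma mlin (a b : R) : measurable_fun setT (fun v : R => a * v - b).
Proof.
by apply: measurable_realfun.measurable_funB => //.
Qed.

Lemma mlin2 (a b c : R) : measurable_fun setT (fun v : R => a * v - b - c).
Proof.
apply: measurable_realfun.measurable_funB => //; exact: mlin.
Qed.

Lemma util_D (s : R -> 'I_K.+1) (hs : forall k, measurable (Apre s k)) :
  util P xb pb s = (\int[P]_(x in @D01 R) (xb (s x) * x - pb (s x))%:E)%E.
Proof.
rewrite /util intTD //; apply/measurable_realfun.measurable_EFinP.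
exact: (@sel_meas R K s hs (fun k v => xb k * v - pb k) (fun k => mlin _ _)).
Qed.

Lemma util_int (s : R -> 'I_K.+1) (hs : forall k, measurable (Apre s k)) :
  P.-integrable (@D01 R) (EFin \o (fun x => xb (s x) * x - pb (s x))).
Proof.
apply: (@sel_int R P K s hs (fun k v => xb k * v - pb k) (fun k => mlin _ _) 2).
move=> k v; rewrite /D01 /= in_itv /= => /andP[v0 v1].
have := xb_ge0 k; have := xb_le1 k; have := pb_ge0 k; have := pb_le1 k.
move=> *; rewrite ler_norml; apply/andP; split; nra.
Qed.

Lemma round_ineq (s : R -> 'I_K.+1) (hs : forall k, measurable (Apre s k)) :
  (util P xb pb s - util P xb pb (qstrat P pi) <=
   (\sum_k fine (P (Apre s k)) * g k - \sum_k pi k * g k)%:E)%E.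
Proof.
have hq : forall k, measurable (Apre (qstrat P pi) k).
  by move=> k; exact: (Apre_q_meas hsupp pi_ge0 pi_sum).
have gb : forall k, `|g k| <= 1.
  move=> k; have /andP[] := gvec_range hsupp pi_ge0 pi_sum xb_mono xb_ge0 xb_le1 pb_ge0 pb_le1 k.
  by move=> *; rewrite ler_norml; apply/andP.
have int3 : forall sg : R -> 'I_K.+1, (forall k, measurable (Apre sg k)) ->
    P.-integrable (@D01 R) (EFin \o (fun x => xb (sg x) * x - pb (sg x) - g (sg x))).
  move=> sg hsg.
  apply: (@sel_int R P K sg hsg (fun k v => xb k * v - pb k - g k) (fun k => mlin2 _ _ _) 3).
  move=> k v; rewrite /D01 /= in_itv /= => /andP[v0 v1].
  have := xb_ge0 k; have := xb_le1 k; have := pb_ge0 k; have := pb_le1 k.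
  have := gb k; rewrite ler_norml => /andP[g1 g2].
  move=> *; rewrite ler_norml; apply/andP; split; nra.
have intg : forall sg : R -> 'I_K.+1, (forall k, measurable (Apre sg k)) ->
    P.-integrable (@D01 R) (EFin \o (fun x => g (sg x))).
  move=> sg hsg.
  apply: (@sel_int R P K sg hsg (fun k v => g k) (fun k => measurable_cst _) 1).
  by move=> k v _; exact: gb.
have split3 : forall sg : R -> 'I_K.+1, (forall k, measurable (Apre sg k)) ->
    (\int[P]_(x in @D01 R) ((xb (sg x) * x - pb (sg x) - g (sg x))%:E) =
     \int[P]_(x in @D01 R) ((xb (sg x) * x - pb (sg x))%:E) -
     (\sum_k fine (P (Apre sg k)) * g k)%:E)%E.
  move=> sg hsg; rewrite -(sel_intc hsupp hsg) -integralB_EFin //.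
  - exact: mD01.
  - exact: util_int.
  - exact: intg.
have le : (\int[P]_(x in @D01 R) ((xb (s x) * x - pb (s x) - g (s x))%:E) <=
     \int[P]_(x in @D01 R) ((xb (qstrat P pi x) * x - pb (qstrat P pi x)
        - g (qstrat P pi x))%:E))%E.
  apply: le_integral; [exact: mD01 | exact: int3 | exact: int3 |].
  move=> x _; rewrite lee_fin /g !gvecH.
  have -> : HH P pi xb (qstrat P pi x) x = HH P pi xb (mm P pi x) x by rewrite /HH /SS qstratE.
  by apply: (HH_max hsupp pi_ge0 pi_sum xb_mono); rewrite -ltnS; exact: ltn_ord.
rewrite !split3 // in le.
have eqpi : \sum_k fine (P (Apre (qstrat P pi) k)) * g k = \sum_k pi k * g k.
  by apply: eq_bigr => k _; rewrite (PA_q hsupp hcont pi_ge0 pi_sum).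
rewrite eqpi in le.
rewrite (util_D hs) (util_D hq).
move: le (integrable_fin_num (@mD01 R) (util_int hs)) (integrable_fin_num (@mD01 R) (util_int hq)).
move: (\int[P]_(x in _) _)%E (\int[P]_(x in _) _)%E => a b.
case: a => // a; case: b => // b; rewrite -!EFinB !lee_fin => *; lra.
Qed.

End Round.

Lemma weights_sum (R : realType) (P : probability R R)
  (hsupp : P `[0%R, 1%R]%classic = 1%E) (K : nat) (s : R -> 'I_K.+1)
  (hs : forall k, measurable (Apre s k)) :
  \sum_k fine (P (Apre s k)) = 1.
Proof.
have := sel_intc hsupp hs (fun _ => 1).
rewrite (_ : (fun x => _) = cst 1%:E) // integral_cst; last exact: mD01.
move=> h.
have e : ((\sum_k fine (P (Apre s k)) * 1)%:E = 1%:E)%E.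
  by rewrite -h mul1e; exact: hsupp.
move/eqP: e; rewrite eqe => /eqP <-.
by apply: eq_bigr => k _; rewrite mulr1.
Qed.

Unset Implicit Arguments.

Theorem mainTheorem2 (R : realType) (n K T : nat) (i : 'I_n)
  (P : probability R R)
  (P_support : P `[0%R, 1%R]%classic = 1%E)
  (P_cont : forall r : R, P [set r] = 0%E)
  (x : nat -> {ffun 'I_n -> 'I_K.+1} -> 'I_n -> R)
  (p : nat -> {ffun 'I_n -> 'I_K.+1} -> 'I_n -> R)
  (x_ge0 : forall t b l, 0 <= x t b l)
  (x_sum : forall t b, \sum_(l < n) x t b l <= 1)
  (p_range : forall t b l, 0 <= p t b l <= 1)
  (x_mono : forall t (b : {ffun 'I_n -> 'I_K.+1}) (l : 'I_n) (j j' : 'I_K.+1),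
      (j <= j')%N -> x t (upd b l j) l <= x t (upd b l j') l)
  (bo : nat -> {ffun 'I_n -> 'I_K.+1})
  (A : seq {ffun 'I_K.+1 -> R} -> {ffun 'I_K.+1 -> R})
  (A_simplex : forall h, (forall k, 0 <= A h k) /\ \sum_(k < K.+1) A h k = 1)
  (RegA : R)
  (A_regret : forall r : nat -> {ffun 'I_K.+1 -> R},
      (forall t k, -1 <= r t k <= 1) ->
      forall j, ol_regret A r T j <= RegA) :
  let xb := fun t (j : 'I_K.+1) => x t (upd (bo t) i j) i in
  let pb := fun t (j : 'I_K.+1) => p t (upd (bo t) i j) i in
  let s_meta := fun t => qstrat P (A (meta_hist P A xb pb t)) in
  forall s : R -> 'I_K.+1,
    (forall j : 'I_K.+1, measurable (s @^-1` [set j])) ->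
    (\sum_(t < T) (util P (xb t) (pb t) s - util P (xb t) (pb t) (s_meta t))
       <= RegA%:E)%E.
Proof.
move=> xb pb s_meta s hs.
pose r t := gvec P (xb t) (pb t) (A (meta_hist P A xb pb t)).
have hist : forall t, meta_hist P A xb pb t = [seq r u | u <- iota 0 t].
  elim=> [|t IH] //.
  rewrite (_ : iota 0 t.+1 = rcons (iota 0 t) t); last by rewrite -cats1 -addn1 iotaD.
  by rewrite map_rcons -IH.
have pi0 t : forall k, 0 <= A (meta_hist P A xb pb t) k by case: (A_simplex (meta_hist P A xb pb t)).
have pi1 t : \sum_(k < K.+1) A (meta_hist P A xb pb t) k = 1 by case: (A_simplex (meta_hist P A xb pb t)).
have xm t : forall j j' : 'I_K.+1, (j <= j')%N -> xb t j <= xb t j'.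
  by move=> j j' jj; apply: x_mono.
have x0 t : forall j, 0 <= xb t j by move=> j; apply: x_ge0.
have x1 t : forall j, xb t j <= 1.
  move=> j; apply: le_trans (x_sum t (upd (bo t) i j)).
  by rewrite (bigD1 i) //= lerDl sumr_ge0.
have p0 t : forall j, 0 <= pb t j by move=> j; case/andP: (p_range t (upd (bo t) i j) i).
have p1 t : forall j, pb t j <= 1 by move=> j; case/andP: (p_range t (upd (bo t) i j) i).
have hs' : forall k, measurable (Apre s k) by [].
set w := fun k => fine (P (Apre s k)).
have w0 : forall k, 0 <= w k by move=> k; rewrite /w fine_ge0 // measure_ge0.
have w1 : \sum_k w k = 1 := weights_sum P_support hs'.
apply: (@le_trans _ _ (\sum_(t < T) ((\sum_k w k * r t k - \sum_k A (meta_hist P A xb pb t) k * r t k)%:E))%E).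
  apply: lee_sum => t _.
  exact: (round_ineq P_support P_cont (pi0 t) (pi1 t) (xm t) (x0 t) (x1 t) (p0 t) (p1 t) hs').
rewrite sumEFin lee_fin.
have rr : forall t k, -1 <= r t k <= 1.
  by move=> t k; exact: (gvec_range P_support (pi0 t) (pi1 t) (xm t) (x0 t) (x1 t) (p0 t) (p1 t)).
have reg := A_regret r rr.
have -> : \sum_(t < T) (\sum_k w k * r t k - \sum_k A (meta_hist P A xb pb t) k * r t k)
    = \sum_k w k * ol_regret A r T k.
  rewrite /ol_regret.
  under eq_bigr => t _.
    rewrite -[X in _ - X]mul1r -w1 mulr_suml -sumrB.
    under eq_bigr => k _ do rewrite -mulrBr.
  over.
  rewrite /= exchange_big /=; apply: eq_bigr => k _; rewrite mulr_sumr.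
  by apply: eq_bigr => t _; rewrite hist.
apply: le_trans (_ : \sum_k w k * RegA <= _).
  by apply: ler_sum => k _; apply: ler_wpM2l.
by rewrite -mulr_suml w1 mul1r.
Qed.
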